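(* Let $g\in\mathbb Y$ and let $\hat x_\alpha\in R_\alpha(g)$, $\alpha>0$, be any selection. Define $\vartheta_g:(0,\infty)\to\mathbb R$ by $\vartheta_g(\alpha):=\inf_{x\in\mathrm{dom}(\mathcal R)}T_\alpha(x,g)=\frac1{2\alpha}\|g-A\hat x_\alpha\|^2_{\mathbb Y}+\mathcal R(\hat x_\alpha)$. Then $\vartheta_g$ is convex, non-increasing and continuously differentiable with $$\vartheta_g'(\alpha)=-\frac1{2\alpha^2}\|g-A\hat x_\alpha\|_{\mathbb Y}^2\quad\text{for all }\alpha>0.$$
   Context: Standing setting: $\mathbb X$ real Banach space, $\tau$ a topology with $(\mathbb X,\tau)$ locally convex Hausdorff; $\mathcal R:\mathbb X\to(-\infty,\infty]$ proper convex with $\tau$-compact sublevel sets $\{\mathcal R\le\lambda\}$; $\mathbb Y$ real Hilbert space; $A:\mathbb X\to\mathbb Y$ linear, $\tau$-to-weak continuous. $T_\alpha(x,g):=\frac1{2\alpha}\|g-Ax\|_{\mathbb Y}^2+\mathcal R(x)$, $R_\alpha(g):=\operatorname{argmin}_{x\in\mathrm{dom}(\mathcal R)}T_\alpha(x,g)$ (nonempty). *)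

(* Defs.v *)
From HB Require Import structures.
From mathcomp Require Import all_boot all_order all_algebra.
From mathcomp Require Import all_classical all_reals all_analysis.
Set Implicit Arguments. Unset Strict Implicit. Unset Printing Implicit Defensive.
Import Order.TTheory GRing.Theory Num.Theory.
Import numFieldNormedType.Exports.
Local Open Scope classical_set_scope.
Local Open Scope ring_scope.

(* An inner product on a real normed space Y inducing its norm:
   (Y, ip) is then a real Hilbert space when Y is complete. *)
Definition is_inner_product (R : realType) (Y : normedModType R)
    (ip : Y -> Y -> R) : Prop :=
  [/\ forall a u v w, ip (a *: u + v) w = a * ip u w + ip v w,
      forall u v, ip u v = ip v u
    & forall u, ip u u = `|u| ^+ 2].

Definition edom (R : realType) (X : Type) (Rf : X -> \bar R) : set X :=
  [set x | (Rf x < +oo)%E].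

Definition econvex (R : realType) (X : lmodType R) (Rf : X -> \bar R) : Prop :=
  forall (x y : X) (t : R), 0 <= t <= 1 ->
    (Rf (t *: x + (1 - t) *: y)%R <= t%:E * Rf x + (1 - t)%:E * Rf y)%E.

Definition Tik (R : realType) (X : lmodType R) (Y : normedModType R)
    (A : X -> Y) (Rf : X -> \bar R) (alpha : R) (x : X) (g : Y) : \bar R :=
  ((2 * alpha)^-1 * `|g - A x| ^+ 2)%:E + Rf x.

Definition Ralpha (R : realType) (X : lmodType R) (Y : normedModType R)
    (A : X -> Y) (Rf : X -> \bar R) (alpha : R) (g : Y) : set X :=
  [set x | edom Rf x /\
           forall z, edom Rf z -> (Tik A Rf alpha x g <= Tik A Rf alpha z g)%E].

Definition vartheta (R : realType) (X : lmodType R) (Y : normedModType R)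
    (A : X -> Y) (Rf : X -> \bar R) (g : Y) (alpha : R) : R :=
  fine (ereal_inf [set Tik A Rf alpha x g | x in edom Rf]).

(* Main.v *)
Require Import Defs.
From HB Require Import structures.
From mathcomp Require Import all_boot all_order all_algebra.
From mathcomp Require Import all_classical all_reals all_analysis.
From mathcomp Require Import lra ring.
Import Order.TTheory GRing.Theory Num.Theory.
Import numFieldNormedType.Exports.
Local Open Scope classical_set_scope.
Local Open Scope ring_scope.

Lemma small_t (R : realType) (d W : R) : 0 <= W ->
  (forall t, 0 < t <= 1 -> 0 <= d + t * W) -> 0 <= d.
Proof.
move=> W0 H; rewrite leNgt; apply/negP => d0.
have Wd : 0 < W - d by lra.
set t := - d / (2 * (W - d)).
have ht : t * (2 * (W - d)) = - d by rewrite /t mulfVK // mulf_neq0 // ?gt_eqF //; lra.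
have t0 : 0 < t by rewrite /t divr_gt0 //; lra.
have t1 : t <= 1 by nra.
have := H t; rewrite t0 t1 => /(_ isT) h; nra.
Qed.

Lemma core_tangent (R : realType) (a b P Q k ra rb : R) :
  0 < a -> 0 < b -> 0 <= P -> 0 <= Q -> k <= P * Q ->
  0 <= b * k - a * P ^+ 2 + rb - ra ->
  - (b - a) * P ^+ 2 / 2 <= (b * Q ^+ 2 / 2 + rb) - (a * P ^+ 2 / 2 + ra).
Proof. move=> a0 b0 P0 Q0 kPQ VI.
have h1 : 0 <= b * (P - Q)^+2 by apply: mulr_ge0; [lra| apply: sqr_ge0].
have h2 : b * k <= b * (P * Q) by rewrite ler_pM2l.
have e : b * (P - Q)^+2 = b * P^+2 - 2 * (b * (P * Q)) + b * Q^+2 by ring.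
lra. Qed.

Lemma core_lip (R : realType) (a b P Q k ra rb : R) :
  0 < a -> 0 < b -> 0 <= P -> 0 <= Q -> k <= P * Q ->
  0 <= b * k - a * P ^+ 2 + rb - ra ->
  0 <= a * k - b * Q ^+ 2 + ra - rb ->
  b * `|Q - P| <= `|b - a| * P.
Proof.
move=> a0 b0 P0 Q0 kPQ V1 V2.
have h2 : (a + b) * k <= (a + b) * (P * Q) by rewrite ler_pM2l; lra.
have e : b * (P - Q)^+2 - (b - a) * P * (P - Q) = a * P^+2 + b * Q ^+2 - (a + b) * (P * Q) by ring.
have H : b * (P - Q)^+2 <= (b - a) * P * (P - Q) by lra.
have H2 : (b - a) * P * (P - Q) <= `|b - a| * P * `|Q - P|.
  apply: le_trans (ler_norm _) _; rewrite !normrM (ger0_norm P0) (distrC P Q). done.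
have [->|QP] := eqVneq Q P; first by rewrite subrr normr0 mulr0 mulr_ge0.
have hp : 0 < `|Q - P| by rewrite normr_gt0 subr_eq0.
have e2 : (P - Q)^+2 = `|Q - P| * `|Q - P|.
  by rewrite -expr2 real_normK ?num_real // -sqrrN opprB.
rewrite e2 mulrA in H.
have := le_trans H H2; rewrite ler_pM2r //.
Qed.

Section S.
Variables (R : realType) (X : completeNormedModType R) (Y : completeNormedModType R).
Variables (ip : Y -> Y -> R) (Yh : is_inner_product ip) (A : {linear X -> Y}).

Lemma ip0 w : ip 0 w = 0.
Proof.
case: Yh => lin _ _; have h := lin 1 0 0 w.
rewrite scale1r addr0 mul1r in h. by apply: (addrI (ip 0 w)); rewrite addr0 -h.
Qed.
Lemma ipD u v w : ip (u + v) w = ip u w + ip v w.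
Proof. by case: Yh => lin _ _; have := lin 1 u v w; rewrite scale1r mul1r. Qed.
Lemma ipZ t u w : ip (t *: u) w = t * ip u w.
Proof. by case: Yh => lin _ _; have := lin t u 0 w; rewrite addr0 ip0 addr0. Qed.
Lemma ipN u w : ip (- u) w = - ip u w.
Proof. by rewrite -scaleN1r ipZ mulN1r. Qed.
Lemma ipC u w : ip u w = ip w u.
Proof. by case: Yh. Qed.
Lemma ipDr u v w : ip w (u + v) = ip w u + ip w v.
Proof. by rewrite ipC ipD !(ipC w). Qed.
Lemma ipZr t u w : ip w (t *: u) = t * ip w u.
Proof. by rewrite ipC ipZ ipC. Qed.
Lemma ipn u : ip u u = `|u| ^+ 2.
Proof. by case: Yh. Qed.

Lemma nexp u t w : `|u + t *: w| ^+ 2 = `|u| ^+ 2 + 2 * t * ip u w + t ^+ 2 * `|w| ^+ 2.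
Proof.
rewrite -!ipn !ipD !ipZ !ipDr !ipZr (ipC w u); ring.
Qed.

Lemma CS u w : ip u w <= `|u| * `|w|.
Proof.
have h := nexp u 1 w; rewrite scale1r in h.
have h1 := ler_normD u w.
have h2 : `|u + w| ^+ 2 <= (`|u| + `|w|) ^+ 2.
  by rewrite ler_sqr ?nnegrE // addr_ge0.
nra.
Qed.

Variables (Rf : X -> \bar R) (Rf_noninf : forall x, Rf x != -oo%E)
  (Rf_convex : econvex Rf) (g : Y) (xhat : R -> X)
  (xhat_sel : forall alpha, 0 < alpha -> Ralpha A Rf alpha g (xhat alpha)).

Lemma dom_fin x : edom Rf x -> Rf x = (fine (Rf x))%:E.
Proof.
move=> h; rewrite fineK // fin_numE Rf_noninf /=.
by rewrite (lt_eqF h).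
Qed.

Lemma decomp (x y : X) t :
  g - A (t *: y + (1 - t) *: x) = (g - A x) + t *: ((g - A y) - (g - A x)).
Proof.
rewrite linearD !linearZ /= scalerBl scale1r scalerBr.
set p := t *: A x; set q := t *: A y; set tg := t *: g.
rewrite !scalerBr -/p -/q -/tg.
rewrite [- (tg - p)]opprB (addrC (tg - q)) (addrA (p - tg)) subrK.
rewrite opprD opprB -!addrA; congr (g + _).
by rewrite addrCA [RHS]addrCA (addrC (- q)).
Qed.

Lemma VI a y : 0 < a -> edom Rf y ->
  0 <= ip (g - A (xhat a)) ((g - A y) - (g - A (xhat a))) / a
       + fine (Rf y) - fine (Rf (xhat a)).
Proof.
move=> a0 dy; have [dx xmin] := xhat_sel a a0.
set x := xhat a in dx xmin *.
set u := g - A x; set v := g - A y.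
set rx := fine (Rf x); set ry := fine (Rf y).
set c := ip u (v - u).
apply: (@small_t _ _ (`|v - u| ^+ 2 / (2 * a))).
  by rewrite divr_ge0 // ?sqr_ge0 //; lra.
move=> t /andP[t0 t1].
set z := t *: y + (1 - t) *: x.
have hz : (Rf z <= (t * ry + (1 - t) * rx)%:E)%E.
  have := Rf_convex y x t; rewrite (ltW t0) t1 => /(_ isT).
  by rewrite (dom_fin _ dy) (dom_fin _ dx) -!EFinM -EFinD.
have dz : edom Rf z by rewrite /edom /=; apply: le_lt_trans hz _; exact: ltry.
have := xmin z dz; rewrite /Tik (dom_fin _ dx) (dom_fin _ dz) -!EFinD lee_fin.
rewrite decomp -/u -/v nexp.
have := hz; rewrite (dom_fin _ dz) lee_fin.
set rz := fine (Rf z) => hz' I.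
have ia : 0 < a^-1 by rewrite invr_gt0.
have e2 : (2 * a)^-1 = a^-1 / 2 by rewrite invfM mulrC.
rewrite e2 in I; rewrite -/c.
rewrite [c / a]mulrC [_ / (2 * a)]mulrC e2.
rewrite /= -/rx -/c in I.
have key : 0 <= t * (a^-1 * c + ry - rx + t * (a^-1 / 2 * `|v - u| ^+ 2)) by nra.
by rewrite pmulr_rge0 in key.
Qed.

Definition th := vartheta A Rf g.
Definition sn a := `|g - A (xhat a)|.
Definition rho a := fine (Rf (xhat a)).
Definition P a := sn a / a.

Lemma ipBr u v w : ip w (u - v) = ip w u - ip w v.
Proof. by rewrite ipDr; congr (_ + _); rewrite ipC ipN ipC. Qed.

Lemma th_E a : 0 < a -> (th a)%:E = Tik A Rf a (xhat a) g /\ th a = (2 * a)^-1 * sn a ^+ 2 + rho a.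
Proof.
move=> a0; have [dx xmin] := xhat_sel a a0.
have e : ereal_inf [set Tik A Rf a x g | x in edom Rf] = Tik A Rf a (xhat a) g.
  apply/le_anti/andP; split.
    by apply: ereal_inf_lbound; exists (xhat a).
  by apply/ereal_infP => _ [z dz <-]; apply: xmin.
have e2 : Tik A Rf a (xhat a) g = ((2 * a)^-1 * sn a ^+ 2 + rho a)%:E.
  by rewrite /Tik (dom_fin _ dx) -EFinD.
rewrite /th /vartheta e e2 /=; split => //.
Qed.

Lemma th_eq a : 0 < a -> th a = a * P a ^+ 2 / 2 + rho a.
Proof.
move=> a0; have [_ ->] := th_E a a0; congr (_ + _); rewrite /P.
by field; rewrite gt_eqF.
Qed.

Lemma P_ge0 a : 0 < a -> 0 <= P a.
Proof. by move=> a0; rewrite /P /sn divr_ge0 // ltW. Qed.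

Lemma two a b : 0 < a -> 0 < b ->
  - (b - a) * P a ^+ 2 / 2 <= th b - th a /\ b * `|P b - P a| <= `|b - a| * P a.
Proof.
move=> a0 b0.
have [dxa _] := xhat_sel a a0; have [dxb _] := xhat_sel b b0.
set ua := g - A (xhat a); set ub := g - A (xhat b).
set k := ip ua ub / (a * b).
have an : a != 0 by rewrite gt_eqF. have bn : b != 0 by rewrite gt_eqF.
have V1 : 0 <= b * k - a * P a ^+ 2 + rho b - rho a.
  have h := VI a _ a0 dxb; rewrite -/ua -/ub ipBr ipn mulrBl in h.
  have e1 : ip ua ub / a = b * k by rewrite /k; field; rewrite an bn.
  have e2 : `|ua| ^+ 2 / a = a * P a ^+ 2 by rewrite /P /sn -/ua; field.
  rewrite /rho; lra.
have V2 : 0 <= a * k - b * P b ^+ 2 + rho a - rho b.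
  have h := VI b _ b0 dxa; rewrite -/ua -/ub ipBr ipn (ipC ub ua) mulrBl in h.
  have e1 : ip ua ub / b = a * k by rewrite /k; field; rewrite an bn.
  have e2 : `|ub| ^+ 2 / b = b * P b ^+ 2 by rewrite /P /sn -/ub; field.
  rewrite /rho; lra.
have C : k <= P a * P b.
  rewrite /k /P /sn -/ua -/ub.
  have -> : `|ua| / a * (`|ub| / b) = `|ua| * `|ub| / (a * b) by field; rewrite ?an ?bn.
  by rewrite ler_pM2r ?invr_gt0 ?mulr_gt0 // CS.
split.
  rewrite (th_eq a a0) (th_eq b b0).
  by have := @core_tangent R a b (P a) (P b) k (rho a) (rho b) a0 b0 (P_ge0 a a0) (P_ge0 b b0) C V1.
by have := @core_lip R a b (P a) (P b) k (rho a) (rho b) a0 b0 (P_ge0 a a0) (P_ge0 b b0) C V1 V2.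
Qed.

Lemma P_lip a b : 0 < a -> a / 2 <= b -> `|P b - P a| <= 2 * P a / a * `|b - a|.
Proof.
move=> a0 ab; have b0 : 0 < b by lra.
have [_ h] := two a b a0 b0.
have Pa := P_ge0 a a0.
have e : 2 * P a / a * `|b - a| = (2 * P a * `|b - a|) / a by rewrite mulrAC.
rewrite e ler_pdivlMr //.
have := normr_ge0 (P b - P a); have := normr_ge0 (b - a). nra.
Qed.

Lemma P2_bound a b : 0 < a -> `|b - a| <= a / 2 ->
  `|P b ^+ 2 - P a ^+ 2| <= 6 * P a ^+ 2 / a * `|b - a|.
Proof.
move=> a0 hba.
have ab : a / 2 <= b by move: hba; rewrite ler_norml; lra.
have b0 : 0 < b by lra.
have h := P_lip a b a0 ab.
have Pa := P_ge0 a a0; have Pb := P_ge0 b b0.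
have e : 2 * P a / a * `|b - a| = (2 * P a * `|b - a|) / a by rewrite mulrAC.
have h' : `|P b - P a| * a <= 2 * P a * `|b - a| by rewrite -ler_pdivlMr // -e.
have hPb : P b <= 2 * P a.
  have : `|P b - P a| <= P a.
    rewrite -(ler_pM2r a0); apply: le_trans h' _; nra.
  rewrite ler_norml; lra.
have e2 : P b ^+ 2 - P a ^+ 2 = (P b - P a) * (P b + P a) by ring.
rewrite e2 normrM (ger0_norm (addr_ge0 Pb Pa)).
have e3 : 6 * P a ^+ 2 / a * `|b - a| = (6 * P a ^+ 2 * `|b - a|) / a by rewrite mulrAC.
rewrite e3 ler_pdivlMr //.
have n1 := normr_ge0 (P b - P a); have n2 := normr_ge0 (b - a).
have s1 : `|P b - P a| * a * (P b + P a) <= 2 * P a * `|b - a| * (P b + P a).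
  by apply: ler_wpM2r; [rewrite addr_ge0|].
have s2 : 2 * P a * `|b - a| * (P b + P a) <= 2 * P a * `|b - a| * (3 * P a).
  apply: ler_wpM2l; last lra. by apply: mulr_ge0 => //; apply: mulr_ge0.
have e4 : `|P b - P a| * (P b + P a) * a = `|P b - P a| * a * (P b + P a) by ring.
rewrite e4; apply: le_trans s1 _; apply: le_trans s2 _; lra.
Qed.

Lemma diffq a b : 0 < a -> 0 < b -> b != a ->
  `|(th b - th a) / (b - a) + P a ^+ 2 / 2| <= `|P b ^+ 2 - P a ^+ 2| / 2.
Proof.
move=> a0 b0 ba.
have [h1 _] := two a b a0 b0; have [h2 _] := two b a b0 a0.
have d0 : b - a != 0 by rewrite subr_eq0.
set q := (th b - th a) / (b - a).
have eq : th b - th a = q * (b - a) by rewrite /q divfK.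
rewrite eq in h1; have eq' : th a - th b = - (q * (b - a)) by rewrite -eq opprB.
rewrite eq' in h2.
have [lt|gt] := ltP a b.
  have hx : 0 <= q + P a ^+ 2 / 2 by nra.
  have hy : q + P a ^+ 2 / 2 <= (P a ^+ 2 - P b ^+ 2) / 2 by nra.
  rewrite ger0_norm // distrC; apply: le_trans hy _.
  by rewrite ler_pM2r // ler_norm.
have lt : b < a by rewrite lt_neqAle ba.
have hx : q + P a ^+ 2 / 2 <= 0 by nra.
have hy : (P a ^+ 2 - P b ^+ 2) / 2 <= q + P a ^+ 2 / 2 by nra.
rewrite ler0_norm //.
have : - ((P a ^+ 2 - P b ^+ 2) / 2) <= `|P b ^+ 2 - P a ^+ 2| / 2.
  rewrite -mulNr opprB ler_pM2r //; exact: ler_norm.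
lra.
Qed.

Lemma deriv_cvg a : 0 < a ->
  (fun h => h^-1 *: (th (h + a) - th a)) @ 0^' --> - (P a ^+ 2 / 2).
Proof.
move=> a0; apply/cvgrPdist_le => eps e0.
have Pa := P_ge0 a a0.
set K := 6 * P a ^+ 2 / a + 1.
have K0 : 0 < K.
  have : 0 <= 6 * P a ^+ 2 / a by rewrite divr_ge0 ?(ltW a0) // mulr_ge0 // exprn_ge0.
  rewrite /K; lra.
have d0 : 0 < Num.min (a / 2) (eps / K) by rewrite lt_min !divr_gt0.
near=> h.
have hn0 : h != 0 by near: h; exact: nbhs_dnbhs_neq.
have hlt : `|h| < Num.min (a / 2) (eps / K) by near: h; exact: dnbhs0_lt.
rewrite lt_min in hlt; case/andP: hlt => h1 h2.
have hb : h + a - a = h by rewrite addrK.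
have b0 : 0 < h + a by move: h1; rewrite ltr_norml; lra.
have ba : h + a != a by rewrite -subr_eq0 hb.
have D := diffq a (h + a) a0 b0 ba.
have hh : `|h + a - a| <= a / 2 by rewrite hb ltW.
have B := P2_bound a (h + a) a0 hh.
rewrite hb in D B.
have -> : h^-1 *: (th (h + a) - th a) = (th (h + a) - th a) / h by rewrite mulrC.
rewrite -opprD normrN addrC.
apply: le_trans D _.
have hK : K * `|h| <= eps by rewrite -ler_pdivlMl // mulrC ltW.
have : 6 * P a ^+ 2 / a * `|h| <= K * `|h| by rewrite ler_pM2r ?normr_gt0 // /K lerDl.
have := normr_ge0 h. lra.
Unshelve. all: by end_near.
Qed.

Lemma d1E a : 0 < a -> derive1 th a = - (P a ^+ 2 / 2).
Proof. by move=> a0; rewrite /derive1; apply: cvg_lim => //; exact: deriv_cvg. Qed.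

Lemma main_sec :
  let theta := vartheta A Rf g in
  [/\ forall alpha, 0 < alpha ->
        (theta alpha)%:E = ((2 * alpha)^-1 * `|g - A (xhat alpha)| ^+ 2)%:E
                            + Rf (xhat alpha),
      forall a b t, 0 < a -> 0 < b -> 0 <= t <= 1 ->
        theta (t * a + (1 - t) * b) <= t * theta a + (1 - t) * theta b,
      forall a b, 0 < a -> a <= b -> theta b <= theta a,
      forall alpha, 0 < alpha ->
        derivable theta alpha 1 /\
        derive1 theta alpha = - ((2 * alpha ^+ 2)^-1 * `|g - A (xhat alpha)| ^+ 2)
    & forall alpha, 0 < alpha -> {for alpha, continuous (derive1 theta)}].
Proof.
move=> theta; rewrite /theta -/th; split.
- by move=> a a0; exact: (th_E a a0).1.
- move=> a b t a0 b0 /andP[t0 t1].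
  have c0 : 0 < t * a + (1 - t) * b.
    have [->|tn0] := eqVneq t 0; first by rewrite mul0r add0r subr0 mul1r.
    have tp : 0 < t by rewrite lt_neqAle eq_sym tn0.
    by rewrite ltr_pwDl ?mulr_gt0 ?mulr_ge0 ?subr_ge0 // ltW.
  have [ha _] := two (t * a + (1 - t) * b) a c0 a0.
  have [hb _] := two (t * a + (1 - t) * b) b c0 b0.
  have t1' : 0 <= 1 - t by rewrite subr_ge0.
  have := ler_wpM2l t0 ha; have := ler_wpM2l t1' hb.
  set c := t * a + (1 - t) * b; set Pc := P c.
  have e : t * (- (a - c) * Pc ^+ 2 / 2) + (1 - t) * (- (b - c) * Pc ^+ 2 / 2) = 0.
    by rewrite /c; ring.
  lra.
- move=> a b a0 ab.
  have b0 : 0 < b by lra.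
  have [h _] := two b a b0 a0.
  have : 0 <= - (a - b) * P b ^+ 2 / 2.
    by rewrite mulr_ge0 // mulr_ge0 ?sqr_ge0 // oppr_ge0 subr_le0.
  lra.
- move=> a a0; split; last first.
    by rewrite d1E //; congr (- _); rewrite /P /sn; field; rewrite gt_eqF.
  rewrite /derivable; set g1 := fun h => h^-1 *: _.
  suff -> : g1 = (fun h => h^-1 *: (th (h + a) - th a)) by exact: cvgP _ (deriv_cvg a a0).
  by rewrite funeqE /g1 => h /=; rewrite [_%:A]mulr1.
move=> a a0; apply/cvgrPdist_le => eps e0.
have Pa := P_ge0 a a0.
set K := 6 * P a ^+ 2 / a + 1.
have K0 : 0 < K.
  have : 0 <= 6 * P a ^+ 2 / a by rewrite divr_ge0 ?(ltW a0) // mulr_ge0 // exprn_ge0.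
  rewrite /K; lra.
have d0 : 0 < Num.min (a / 2) (eps / K) by rewrite lt_min !divr_gt0.
near=> b.
have hb : ball a (Num.min (a / 2) (eps / K)) b by near: b; exists (Num.min (a / 2) (eps / K)).
rewrite /ball /= lt_min in hb; case/andP: hb => h1 h2.
rewrite distrC in h1 h2.
have b0 : 0 < b by move: h1; rewrite ltr_norml; lra.
rewrite (d1E a a0) (d1E b b0).
have B := P2_bound a b a0 (ltW h1).
have -> : - (P a ^+ 2 / 2) - - (P b ^+ 2 / 2) = (P b ^+ 2 - P a ^+ 2) / 2 by ring.
rewrite normrM (gtr0_norm (_ : 0 < 2^-1)) ?invr_gt0 //.
have hK : K * `|b - a| <= eps by rewrite -ler_pdivlMl // mulrC ltW.
have : 6 * P a ^+ 2 / a * `|b - a| <= K * `|b - a| by apply: ler_wpM2r => //; rewrite /K lerDl.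
have := normr_ge0 (b - a). lra.
Unshelve. all: by end_near.
Qed.

End S.

Theorem proposition5p3
  (R : realType)
  (* X : real Banach space *)
  (X : completeNormedModType R)
  (* tau : a second topology on the carrier of X, making it a locally convex
     Hausdorff space; modelled by a locally convex TVS Xt together with a
     linear bijection e : X -> Xt (inverse f) identifying the carriers *)
  (Xt : tvsType R) (e : {linear X -> Xt}) (f : Xt -> X)
  (ef : cancel e f) (fe : cancel f e) (Xt_hausdorff : hausdorff_space Xt)
  (* Rf : X -> (-oo, +oo], proper, convex, tau-compact sublevel sets *)
  (Rf : X -> \bar R)
  (Rf_noninf : forall x, Rf x != -oo%E)
  (Rf_proper : exists x, (Rf x < +oo)%E)
  (Rf_convex : econvex Rf)
  (Rf_sublevel : forall lam : R, compact (e @` [set x | (Rf x <= lam%:E)%E]))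
  (* Y : real Hilbert space *)
  (Y : completeNormedModType R) (ip : Y -> Y -> R)
  (Y_hilbert : is_inner_product ip)
  (* A : linear, tau-to-weak continuous *)
  (A : {linear X -> Y})
  (A_weak : forall y : Y, continuous (fun z : Xt => ip (A (f z)) y))
  (g : Y) (xhat : R -> X)
  (xhat_sel : forall alpha, 0 < alpha -> Ralpha A Rf alpha g (xhat alpha)) :
  let theta := vartheta A Rf g in
  [/\ (* value of theta at the selection *)
      forall alpha, 0 < alpha ->
        (theta alpha)%:E = ((2 * alpha)^-1 * `|g - A (xhat alpha)| ^+ 2)%:E
                            + Rf (xhat alpha),
      (* convex on (0, oo) *)
      forall a b t, 0 < a -> 0 < b -> 0 <= t <= 1 ->
        theta (t * a + (1 - t) * b) <= t * theta a + (1 - t) * theta b,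
      (* non-increasing on (0, oo) *)
      forall a b, 0 < a -> a <= b -> theta b <= theta a,
      (* differentiable with the stated derivative *)
      forall alpha, 0 < alpha ->
        derivable theta alpha 1 /\
        derive1 theta alpha = - ((2 * alpha ^+ 2)^-1 * `|g - A (xhat alpha)| ^+ 2)
    & (* the derivative is continuous on (0, oo) *)
      forall alpha, 0 < alpha -> {for alpha, continuous (derive1 theta)}].
Proof.
exact: (@main_sec R X Y ip Y_hilbert A Rf Rf_noninf Rf_convex g xhat xhat_sel).
Qed.
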